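(* Let $n\ge 3$, let $\mathbf{p}\in\mathbb{Q}^{n!}$ be any profile, and write $Q_{\mathbf{p}}=\sum_{\ell=1}^{n!}p_\ell R_\ell$ in column form as $Q_{\mathbf{p}}=[\mathbf{q}_1\ \cdots\ \mathbf{q}_n]$. Define $\mathbf{t}_k=\sum_{j=1}^{k}\mathbf{q}_j$ for $k=1,\dots,n-1$. Then a face $G$ of the braid arrangement is a possible outcome for a positional voting procedure with input $\mathbf{p}$ (i.e. there is a nonzero $\mathbf{w}\in\overline{W}$ with $Q_{\mathbf{p}}\mathbf{w}\in G$) if and only if $G$ intersects the convex hull of $\mathbf{t}_1,\dots,\mathbf{t}_{n-1}$.
   Context: Work over $\mathbb{Q}$. Label the permutations of $S_n$ as $\sigma_1,\dots,\sigma_{n!}$ (lexicographically in one-line notation), where $\sigma_\ell$ is the ranking in which candidate $\sigma_\ell(k)$ is placed $k$-th; $p_\ell$ is the number of voters with preference $\sigma_\ell$. $R_\ell$ is the $n\times n$ permutation matrix with $R_\ell(i,j)=1$ iff $\sigma_\ell(j)=i$, so $Q_{\mathbf{p}}(i,j)$ is the number of voters ranking candidate $i$ in position $j$. $\overline{W}=\{\mathbf{x}\in\mathbb{Q}^n : x_1\ge\cdots\ge x_n,\ x_1+\cdots+x_n=0\}$ is the set of weighting vectors; using $\mathbf{w}$, the results vector is $Q_{\mathbf{p}}\mathbf{w}$. The faces of the braid arrangement are the equivalence classes of $\mathbb{Q}^n$ under the relation: $\mathbf{x}\sim\mathbf{y}$ iff for all $i,j$, $x_i>x_j\iff y_i>y_j$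 and $x_i=x_j\iff y_i=y_j$ (equivalently, faces correspond to ordered set partitions of the candidates, i.e. rankings with ties). *)

(* Defs.v *)
From mathcomp Require Import all_boot all_order all_algebra all_fingroup.
Set Implicit Arguments. Unset Strict Implicit. Unset Printing Implicit Defensive.
Import Order.TTheory GRing.Theory Num.Theory.
Local Open Scope ring_scope.

(* A profile assigns to each ranking s : 'S_n (candidate s k is placed k-th)
   the (rational) number of voters with that preference. *)

Definition rank_mx n (s : 'S_n) : 'M[rat]_n :=
  \matrix_(i < n, j < n) ((s j == i)%:R : rat).

Definition Qp n (p : 'S_n -> rat) : 'M[rat]_n :=
  \sum_(s : 'S_n) p s *: rank_mx s.

Definition Wbar n (w : 'cV[rat]_n) : Prop :=
  (forall i j : 'I_n, (i <= j)%N -> w j 0 <= w i 0) /\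
  \sum_(i < n) w i 0 = 0.

Definition same_face n (x y : 'cV[rat]_n) : Prop :=
  forall i j : 'I_n,
    (x i 0 > x j 0 <-> y i 0 > y j 0) /\ (x i 0 = x j 0 <-> y i 0 = y j 0).

Definition is_face n (G : 'cV[rat]_n -> Prop) : Prop :=
  exists x : 'cV[rat]_n, forall y, G y <-> same_face x y.

(* t_k = q_1 + ... + q_k, k = 1..n-1; indexed by k : 'I_n.-1 (zero-based,
   so index k stands for t_{k+1} = sum of columns 0..k) *)
Definition tvec n (Q : 'M[rat]_n) (k : 'I_n.-1) : 'cV[rat]_n :=
  \sum_(j < n | (j <= k)%N) col j Q.

Definition in_conv_hull n m (v : 'I_m -> 'cV[rat]_n) (y : 'cV[rat]_n) : Prop :=
  exists lam : 'I_m -> rat,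
    (forall k, 0 <= lam k) /\ \sum_(k < m) lam k = 1 /\
    y = \sum_(k < m) lam k *: v k.

(* Main.v *)
Require Import Defs.
From mathcomp Require Import all_boot all_order all_algebra all_fingroup.
Import Order.TTheory GRing.Theory Num.Theory.
Set Implicit Arguments. Unset Strict Implicit. Unset Printing Implicit Defensive.
Local Open Scope ring_scope.

Lemma sf_sym n (x y : 'cV[rat]_n) : same_face x y -> same_face y x.
Proof. move=> h i j; have [h1 h2] := h i j; split; split; by [apply h1|apply h2]. Qed.

Lemma sf_trans n (x y z : 'cV[rat]_n) : same_face x y -> same_face y z -> same_face x z.
Proof.
move=> h g i j; have [h1 h2] := h i j; have [g1 g2] := g i j.
split; split => H; by [apply g1, h1|apply h1, g1|apply g2, h2|apply h2, g2].
Qed.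

Lemma sf_aff n (x : 'cV[rat]_n) a c : 0 < a -> same_face x (a *: x + const_mx c).
Proof.
move=> a0 i j; rewrite !mxE ltrD2r ltr_pM2l //; split => //.
split => [->//|/addIr/mulfI]; apply; exact: lt0r_neq0.
Qed.

Lemma face_aff n (G : 'cV[rat]_n -> Prop) (hG : is_face G) y a c :
  0 < a -> G y <-> G (a *: y + const_mx c).
Proof.
case: hG => x hx a0; split => /hx h; apply/hx.
  exact: sf_trans h (sf_aff y c a0).
exact: sf_trans h (sf_sym (sf_aff y c a0)).
Qed.

Lemma rowsum n (p : 'S_n -> rat) i : \sum_j Qp p i j = \sum_s p s.
Proof.
under eq_bigr => j _ do rewrite /Qp summxE.
rewrite exchange_big; apply: eq_bigr => s _.
under eq_bigr => j _ do rewrite !mxE.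
rewrite -mulr_sumr (bigD1 (s^-1 i)%g) //= permKV eqxx big1 ?addr0 ?mulr1 //.
move=> j hj; rewrite (_ : (s j == i) = false) //; apply/negbTE; apply: contra hj.
by move/eqP <-; rewrite permK.
Qed.

Lemma colsum n (p : 'S_n -> rat) : \sum_j col j (Qp p) = const_mx (\sum_s p s).
Proof. apply/matrixP => i z; rewrite summxE mxE -(rowsum p i); apply: eq_bigr => j _; by rewrite mxE. Qed.

Lemma abel m (Q : 'M[rat]_m.+1) (d : 'I_m -> rat) c :
  Q *m (\col_j (c + \sum_(k < m | (j <= k)%N) d k)) =
  \sum_k d k *: tvec Q k + c *: \sum_j col j Q.
Proof.
apply/matrixP => i z; rewrite !mxE !summxE.
under eq_bigr => j _ do rewrite !mxE mulrDr mulr_sumr.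
rewrite big_split /= addrC mulr_sumr.
congr (_ + _).
  under eq_bigr => j _ do rewrite big_mkcond.
  rewrite exchange_big; apply: eq_bigr => k _.
  rewrite !mxE /tvec summxE mulr_sumr [RHS]big_mkcond; apply: eq_bigr => j _.
  by rewrite !mxE; case: ifP => _; rewrite ?mulr0 // mulrC.
by apply: eq_bigr => j _; rewrite !mxE mulrC.
Qed.

Lemma tele (f : nat -> rat) m j : (j <= m)%N ->
  \sum_(k < m | (j <= k)%N) (f k - f k.+1) = f j - f m.
Proof.
elim: m => [|m IH] hj.
  by rewrite big_ord0; move: hj; rewrite leqn0 => /eqP ->; rewrite subrr.
rewrite big_mkcond big_ord_recr /= -big_mkcond.
case: (leqP j m) => hjm.
  by rewrite IH // addrA subrK.
rewrite addr0 big1 => [|k hk]; last by exfalso; move: hk; rewrite leqNgt (ltn_trans (ltn_ord k) hjm).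
have -> : j = m.+1 by apply/eqP; rewrite eqn_leq hj hjm.
by rewrite subrr.
Qed.

Theorem theorem4p2 (n : nat) (hn : (3 <= n)%N) (p : 'S_n -> rat)
    (G : 'cV[rat]_n -> Prop) (hG : is_face G) :
  (exists w : 'cV[rat]_n, w != 0 /\ Wbar w /\ G (Qp p *m w)) <->
  (exists y : 'cV[rat]_n, G y /\ in_conv_hull (tvec (Qp p)) y).
Proof.
case: n hn p G hG => // m _ p G hG.
set N := \sum_s p s.
split.
  case=> w [wne [[mono sum0] Gw]].
  pose f := fun k : nat => w (inord k) 0.
  pose d := fun k : 'I_m => f k - f k.+1.
  have rep : w = \col_(j < m.+1) (w ord_max 0 + \sum_(k < m | (j <= k)%N) d k).
    apply/matrixP => j z; rewrite ord1 mxE /d tele; last by rewrite -ltnS.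
    rewrite /f; have -> : inord m = ord_max :> 'I_m.+1 by apply: ord_inj; rewrite inordK.
    by rewrite inord_val addrC subrK.
  have d0 : forall k, 0 <= d k.
    move=> k; rewrite /d /f subr_ge0; apply: mono.
    have hk := ltn_ord k; rewrite inordK; last exact: ltnW. by rewrite inordK.
  set D := \sum_k d k.
  have w0 : w 0 0 = w ord_max 0 + D.
    by rewrite [in LHS]rep mxE; congr (_ + _); apply: eq_bigl.
  have Dpos : 0 < D.
    rewrite lt_def sumr_ge0 // andbT; apply/eqP => D0.
    move: wne; rewrite D0 addr0 in w0.
    have e : forall j, w j 0 = w 0 0.
      move=> j; apply/le_anti; rewrite mono // w0 mono //.
      by rewrite -ltnS.
    suff w00 : w 0 0 = 0.
      by case/negP; apply/eqP/matrixP => j z; rewrite ord1 e w00 mxE.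
    move: sum0; under eq_bigr => j _ do rewrite e.
    rewrite sumr_const card_ord -mulr_natl => /eqP; rewrite mulf_eq0 pnatr_eq0 /=.
    by move/eqP.
  exists (\sum_k (d k / D) *: tvec (Qp p) k); split; last first.
    exists (fun k => d k / D); split; first by move=> k; rewrite divr_ge0 // ltW.
    by split => //; rewrite -mulr_suml divff // lt0r_neq0.
  apply (proj2 (@face_aff _ G hG _ D (w ord_max 0 * N) Dpos)).
  move: Gw; rewrite {1}rep abel colsum scaler_sumr.
  congr (G (_ + _)).
    apply: eq_bigr => k _; rewrite scalerA mulrCA divff ?mulr1 //; exact: lt0r_neq0.
  by apply/matrixP => i j; rewrite !mxE.
case=> y [Gy [lam [lam0 [lam1 ye]]]].
pose S := fun j : 'I_m.+1 => \sum_(k < m | (j <= k)%N) lam k.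
pose c := - (\sum_j S j) / (m.+1)%:R.
have S0 : S 0 = 1 by rewrite /S -lam1; apply: eq_bigl.
have Smax : S ord_max = 0.
  by rewrite /S big1 // => k /=; rewrite leqNgt ltn_ord.
exists (\col_j (c + S j)); split; last split.
- apply/eqP => h.
  have := congr1 (fun M : 'cV[rat]_m.+1 => M 0 0 - M ord_max 0) h.
  rewrite /= !mxE S0 Smax addr0 subrr [c + 1]addrC addrK => /eqP.
  by rewrite oner_eq0.
- split.
    move=> i j hij; rewrite !mxE lerD2l /S [X in _ <= X]big_mkcond [X in X <= _]big_mkcond.
    apply: ler_sum => k _; case: ifP => hj; first by rewrite (leq_trans hij hj).
    by case: ifP => // _; exact: lam0.
  under eq_bigr => j _ do rewrite mxE.
  rewrite big_split /= sumr_const card_ord /c.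
  set k := (m.+1)%:R : rat; by rewrite -mulr_natr divfK ?addNr // pnatr_eq0.
- have H := proj1 (@face_aff _ G hG y 1 (c * N) ltr01) Gy.
  have E : Qp p *m (\col_j (c + S j)) = 1 *: y + const_mx (c * N).
    apply: (etrans (abel (Qp p) lam c)).
    rewrite colsum scale1r -ye; congr (_ + _).
    by apply/matrixP => i j; rewrite !mxE.
  by rewrite E.
Qed.
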